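(* Let $V$ be a nonempty set, $E\subset V\times V$, $W\subset V$, and let $B,C\subset V$ satisfy $B\cap C=\emptyset$, $B\cap W=\emptyset$, $C\cap W=\emptyset$. The following are equivalent: (1) for every $b\in B$ and $c\in C$, $\operatorname{cl}_W(R_Wb)\cap\operatorname{cl}_W(R_Wc)=\emptyset$ (i.e. $b$ and $c$ are t-separated w.r.t. $W$); (2) there exist $W_B,W_C\subset V$ with $W_B\cap W_C=\emptyset$, $W_B\cup W_C=W$, and $\operatorname{cl}_W(B\cup W_B)\cap\operatorname{cl}_W(C\cup W_C)=\emptyset$.
   Context: Relations on $V$: $x\,R\,y$ means $(x,y)\in R$; composition $RR'$: $x(RR')y$ iff there is $z$ with $xRz$ and $zR'y$; $R^{-1}$ is the converse; $R^0=\Delta$, $R^{n+1}=RR^n$, $R^+=\bigcup_{k\ge1}R^k$, $R^*=\bigcup_{k\ge0}R^k$. For $S\subset V$, $\Delta_S=\{(x,x):x\in S\}$, $\Delta=\Delta_V$; foreset $RS=\{x:\exists s\in S,\ xRs\}$, $Rc=R\{c\}$. For any relation $F$, $\mathcal T_F=\{O\subset V: OF\subset O\}$ is a topology on $V$. With $W^c=V\setminus W$: $E_W=\Delta_{W^c}E$; $B_W=E(E_W)^*$; $B_W^-=(B_W)^{-1}=(E_W^{-1})^*E^{-1}$; $K_W=B_W^-\Delta_{W^c}B_W$; $C_W=(\Delta_WK_W\Delta_W)^+\cup\Delta_W$; $R_W=\Delta\cup C_W(B_W^-\cup K_W^{-1})$. For $S\subset V$, $\operatorname{cl}_W(S)$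 is the topological closure of $S$ in the topology $\mathcal T_{E_W}$. *)

(* Defs.v *)
Set Implicit Arguments.

Definition rel (V : Type) := V -> V -> Prop.
Definition vset (V : Type) := V -> Prop.

Section Rels.
Variable V : Type.

Definition rcomp (R R' : rel V) : rel V := fun x y => exists z, R x z /\ R' z y.
Definition rconv (R : rel V) : rel V := fun x y => R y x.
Definition rDelta : rel V := fun x y => x = y.
Definition rDeltaS (S : vset V) : rel V := fun x y => x = y /\ S x.
Definition runion (R R' : rel V) : rel V := fun x y => R x y \/ R' x y.
Definition scompl (S : vset V) : vset V := fun x => ~ S x.
Definition sunion (S S' : vset V) : vset V := fun x => S x \/ S' x.

Fixpoint rpow (R : rel V) (n : nat) : rel V :=
  match n with
  | O => rDelta
  | S k => rcomp R (rpow R k)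
  end.
Definition rplus (R : rel V) : rel V := fun x y => exists k, rpow R (S k) x y.
Definition rstar (R : rel V) : rel V := fun x y => exists k, rpow R k x y.

Definition foreset (R : rel V) (S : vset V) : vset V :=
  fun x => exists s, S s /\ R x s.
Definition foreset1 (R : rel V) (c : V) : vset V := foreset R (fun s => s = c).

Definition F_open (F : rel V) (O : vset V) : Prop :=
  forall o y, O o -> F o y -> O y.
Definition F_closure (F : rel V) (S : vset V) : vset V :=
  fun x => forall O, F_open F O -> O x -> exists y, O y /\ S y.

Variable E : rel V.
Variable W : vset V.

Definition E_W : rel V := rcomp (rDeltaS (scompl W)) E.
Definition B_W : rel V := rcomp E (rstar E_W).
Definition B_W_minus : rel V := rconv B_W.
Definition K_W : rel V := rcomp B_W_minus (rcomp (rDeltaS (scompl W)) B_W).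
Definition C_W : rel V :=
  runion (rplus (rcomp (rDeltaS W) (rcomp K_W (rDeltaS W)))) (rDeltaS W).
Definition R_W : rel V :=
  runion rDelta (rcomp C_W (runion B_W_minus (rconv K_W))).
Definition cl_W (S : vset V) : vset V := F_closure E_W S.

End Rels.

(* Main.v *)
Require Import Defs.
From Stdlib Require Import Classical.
Set Implicit Arguments.

Lemma rpow_snoc (V : Type) (R : rel V) k : forall x y z,
  rpow R k x y -> R y z -> rpow R (S k) x z.
Proof.
  induction k; simpl; intros x y z H1 H2.
  - unfold rDelta in H1; subst. exists z; split; [exact H2 | reflexivity].
  - destruct H1 as [m [Hm Hk]]. exists m; split; [exact Hm|]. eapply IHk; eauto.
Qed.

Lemma star_refl (V : Type) (R : rel V) x : rstar R x x.
Proof. exists 0; reflexivity. Qed.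

Lemma star_step (V : Type) (R : rel V) x y z : R x y -> rstar R y z -> rstar R x z.
Proof. intros H [k Hk]. exists (S k). exists y; auto. Qed.

Lemma star_snoc (V : Type) (R : rel V) x y z : rstar R x y -> R y z -> rstar R x z.
Proof. intros [k Hk] H. exists (S k). eapply rpow_snoc; eauto. Qed.

Lemma star_inv (V : Type) (R : rel V) x y : rstar R x y ->
  x = y \/ exists m, R x m /\ rstar R m y.
Proof.
  intros [k Hk]. destruct k; simpl in Hk.
  - left; exact Hk.
  - right. destruct Hk as [m [Hm Hk]]. exists m; split; [exact Hm | exists k; exact Hk].
Qed.

Lemma cl_char (V : Type) (E : rel V) (W S : vset V) x :
  cl_W E W S x <-> exists y, S y /\ rstar (E_W E W) x y.
Proof.
  split.
  - intros H. destruct (H (rstar (E_W E W) x)) as [y [Hy1 Hy2]].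
    + intros o y Ho Hoy. eapply star_snoc; eauto.
    + apply star_refl.
    + exists y; auto.
  - intros [y [Sy [k Hk]]] O HO Ox. exists y; split; [|exact Sy].
    revert x Ox Hk. induction k; simpl; intros x Ox Hk.
    + unfold rDelta in Hk; subst; exact Ox.
    + destruct Hk as [m [Hm Hk]]. apply (IHk m); [eapply HO; eauto | exact Hk].
Qed.

Lemma cl_mono (V : Type) (E : rel V) (W S T : vset V) x :
  (forall y, S y -> T y) -> cl_W E W S x -> cl_W E W T x.
Proof.
  intros HST H O HO Ox. destruct (H O HO Ox) as [y [Oy Sy]]. exists y; auto.
Qed.

Lemma BW_star (V : Type) (E : rel V) (W : vset V) x y :
  ~ W x -> B_W E W x y -> rstar (E_W E W) x y.
Proof.
  intros Hx [m [Hm Hs]]. eapply star_step; [|exact Hs].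
  exists x; split; [split; [reflexivity | exact Hx] | exact Hm].
Qed.

Lemma star_BW (V : Type) (E : rel V) (W : vset V) x y :
  rstar (E_W E W) x y -> x = y \/ (~ W x /\ B_W E W x y).
Proof.
  intros H. destruct (star_inv H) as [H1 | [m [Hm Hs]]]; [left; exact H1|].
  right. destruct Hm as [z [[Hz HW] Hzm]]. subst z. split; [exact HW|].
  exists m; split; assumption.
Qed.

Lemma rpow_pres (V : Type) (R : rel V) (P : vset V) k : forall x z,
  (forall a b, R a b -> P b -> P a) -> rpow R k x z -> P z -> P x.
Proof.
  induction k; simpl; intros x z HR H Pz.
  - unfold rDelta in H; subst; exact Pz.
  - destruct H as [m [Hm Hk]]. eapply HR; [exact Hm|]. eapply IHk; eauto.
Qed.

Lemma rpow_last (V : Type) (R : rel V) (Q : vset V) k : forall x z,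
  (forall a b, R a b -> Q b) -> rpow R (S k) x z -> Q z.
Proof.
  induction k; simpl; intros x z HR H.
  - destruct H as [m [Hm Hk]]. unfold rDelta in Hk; subst. eapply HR; eauto.
  - destruct H as [m [Hm Hk]]. eapply IHk; eauto.
Qed.

Lemma CW_W (V : Type) (E : rel V) (W : vset V) x z :
  C_W E W x z -> W x /\ W z.
Proof.
  intros [[k Hk] | [Hxz Hx]].
  - split.
    + simpl in Hk. destruct Hk as [m [[a [[Ha Wa] _]] Hk]]. subst a. exact Wa.
    + eapply rpow_last; [|exact Hk].
      intros a b [a' [_ [b' [_ [Hb Wb]]]]]. subst; exact Wb.
  - unfold rDelta in Hxz; subst; auto.
Qed.

Lemma CW_pres (V : Type) (E : rel V) (W P : vset V) x z :
  (forall a b, W a -> W b -> K_W E W a b -> P b -> P a) ->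
  C_W E W x z -> P z -> P x.
Proof.
  intros HP [[k Hk] | [Hxz Hx]] Pz.
  - eapply rpow_pres; [|exact Hk|exact Pz].
    intros a b [a' [[Ha Wa] [b' [Hk' [Hb Wb]]]]]. subst. eauto.
  - unfold rDelta in Hxz; subst; auto.
Qed.

Lemma side (V : Type) (E : rel V) (W B WB C WC : vset V) :
  (forall x, B x -> ~ W x) ->
  (forall x, W x -> WB x \/ WC x) ->
  (forall x, ~ (cl_W E W (sunion B WB) x /\ cl_W E W (sunion C WC) x)) ->
  forall b y, B b -> R_W E W y b -> sunion B WB y.
Proof.
  intros HBW Hcov Hdisj b y Bb HR.
  destruct HR as [Hyb | [z [HC Hz]]].
  - unfold rDelta in Hyb; subst; left; exact Bb.
  - right. destruct (CW_W HC) as [Wy Wz].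
    assert (WBz : WB z).
    { destruct (classic (WB z)) as [h|h]; [exact h|].
      destruct (Hcov z Wz) as [h'|WCz]; [contradiction|].
      exfalso. destruct Hz as [Hz | Hz].
      - apply (Hdisj b). split.
        + apply cl_char. exists b; split; [left; exact Bb| apply star_refl].
        + apply cl_char. exists z; split; [right; exact WCz|].
          apply BW_star; auto.
      - destruct Hz as [u [Hub [u' [[Hu Wu] Huz]]]]. subst u'.
        apply (Hdisj u). split.
        + apply cl_char. exists b; split; [left; exact Bb| apply BW_star; auto].
        + apply cl_char. exists z; split; [right; exact WCz|].
          apply BW_star; auto. }
    eapply CW_pres; [|exact HC|exact WBz].
    intros a c Wa Wc Hac WBc.
    destruct (classic (WB a)) as [h|h]; [exact h|].
    destruct (Hcov a Wa) as [h'|WCa]; [contradiction|].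
    exfalso. destruct Hac as [u [Hua [u' [[Hu Wu] Huc]]]]. subst u'.
    apply (Hdisj u). split.
    + apply cl_char. exists c; split; [right; exact WBc| apply BW_star; auto].
    + apply cl_char. exists a; split; [right; exact WCa| apply BW_star; auto].
Qed.

Lemma RW_K (V : Type) (E : rel V) (W : vset V) y1 y2 b :
  ~ W b -> W y1 -> W y2 -> K_W E W y2 y1 -> R_W E W y1 b -> R_W E W y2 b.
Proof.
  intros Wb W1 W2 HK [H | [z [HC Hz]]].
  - unfold rDelta in H; subst; contradiction.
  - right. exists z; split; [|exact Hz].
    assert (St : rcomp (rDeltaS W) (rcomp (K_W E W) (rDeltaS W)) y2 y1).
    { exists y2; split; [split; [reflexivity|exact W2]|].
      exists y1; split; [exact HK| split; [reflexivity|exact W1]]. }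
    left. destruct HC as [[k Hk] | [Hxz _]].
    + exists (S k). exists y1; split; [exact St| exact Hk].
    + unfold rDelta in Hxz; subst. exists 0. exists z; split; [exact St| reflexivity].
Qed.

Theorem proposition2 (V : Type) (E : rel V) (W B C : vset V) :
  inhabited V ->
  (forall x, ~ (B x /\ C x)) ->
  (forall x, ~ (B x /\ W x)) ->
  (forall x, ~ (C x /\ W x)) ->
  ((forall b c, B b -> C c -> forall x,
      ~ (cl_W E W (foreset1 (R_W E W) b) x /\ cl_W E W (foreset1 (R_W E W) c) x))
   <->
   (exists WB WC : vset V,
      (forall x, ~ (WB x /\ WC x)) /\
      (forall x, (WB x \/ WC x) <-> W x) /\
      (forall x, ~ (cl_W E W (sunion B WB) x /\ cl_W E W (sunion C WC) x)))).
Proof.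
  intros _ HBC HBW HCW. split.
  - intros H1.
    set (WB := fun x => W x /\ exists b, B b /\ R_W E W x b).
    exists WB, (fun x => W x /\ ~ WB x). split; [|split].
    + intros x [h1 [_ h2]]; exact (h2 h1).
    + intros x; split.
      * intros [h|h]; destruct h; assumption.
      * intros Wx. destruct (classic (WB x)); [left; assumption| right; split; assumption].
    + intros x [Hx1 Hx2].
      apply cl_char in Hx1. apply cl_char in Hx2.
      destruct Hx1 as [y1 [Hy1 S1]]. destruct Hx2 as [y2 [Hy2 S2]].
      unfold sunion, WB in Hy1. unfold sunion in Hy2. destruct Hy2 as [C2 | [W2 NB2]]; destruct Hy1 as [B1 | [W1 [b [Bb Rb]]]].
      * apply (H1 y1 y2 B1 C2 x). split; apply cl_char.
        -- exists y1; split; [exists y1; split; [reflexivity| left; reflexivity]| exact S1].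
        -- exists y2; split; [exists y2; split; [reflexivity| left; reflexivity]| exact S2].
      * apply (H1 b y2 Bb C2 x). split; apply cl_char.
        -- exists y1; split; [exists b; split; [reflexivity| exact Rb]| exact S1].
        -- exists y2; split; [exists y2; split; [reflexivity| left; reflexivity]| exact S2].
      * apply NB2. split; [exact W2|]. exists y1; split; [exact B1|].
        destruct (star_BW S2) as [e2 | [NW2 BW2]].
        -- subst y2. destruct (star_BW S1) as [e1 | [NW1 _]].
           ++ rewrite <- e1 in B1; exfalso; apply (HBW x); auto.
           ++ contradiction.
        -- right. exists y2; split; [right; split; [reflexivity|exact W2]|].
           destruct (star_BW S1) as [e1 | [NW1 BW1]].
           ++ subst y1. left; exact BW2.
           ++ right. exists x; split; [exact BW1|].
              exists x; split; [split; [reflexivity|exact NW1]| exact BW2].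
      * apply NB2. split; [exact W2|]. exists b; split; [exact Bb|].
        destruct (star_BW S2) as [e2 | [NW2 BW2]].
        -- subst y2. destruct (star_BW S1) as [e1 | [NW1 _]].
           ++ subst; exact Rb.
           ++ contradiction.
        -- destruct (star_BW S1) as [e1 | [NW1 BW1]].
           ++ subst y1; contradiction.
           ++ eapply RW_K; [| exact W1 | exact W2 | | exact Rb].
              ** intros Wb; apply (HBW b); auto.
              ** exists x; split; [exact BW2|].
                 exists x; split; [split; [reflexivity|exact NW1]| exact BW1].
  - intros [WB [WC [Hd [Hu Hcl]]]] b c Bb Cc x [Hb Hc].
    apply (Hcl x). split.
    + eapply cl_mono; [|exact Hb]. intros y [s [Hs Hy]]. subst s.
      eapply (side (C:=C) (WC:=WC)); [| | exact Hcl | exact Bb | exact Hy].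
      * intros z Bz Wz; apply (HBW z); auto.
      * intros z Wz; apply Hu; exact Wz.
    + eapply cl_mono; [|exact Hc]. intros y [s [Hs Hy]]. subst s.
      eapply (side (B:=C) (WB:=WC) (C:=B) (WC:=WB)); [| | | exact Cc | exact Hy].
      * intros z Cz Wz; apply (HCW z); auto.
      * intros z Wz; destruct (proj2 (Hu z) Wz); auto.
      * intros z [h1 h2]; apply (Hcl z); auto.
Qed.
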